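(* Let $\mathbf{A}$ be a 5-dimensional LV algebra with natural basis $e_1,\dots,e_5$ such that $e_ie_j\neq\frac12(e_i+e_j)$ for $\{i,j\}\in\{\{1,2\},\{2,3\},\{3,4\},\{4,5\},\{1,5\}\}$ and $e_ie_j=\frac12(e_i+e_j)$ for $\{i,j\}\in\{\{1,3\},\{1,4\},\{2,4\},\{2,5\},\{3,5\}\}$. Then $\mathrm{Der}(\mathbf{A})=\{0\}$.
   Context: Let $\mathbb{F}$ be a field of characteristic different from $2$. A Lotka–Volterra (LV) algebra of dimension $5$ over $\mathbb{F}$ is a commutative (not necessarily associative) $\mathbb{F}$-algebra $\mathbf{A}$ with a basis $e_1,\dots,e_5$ (the natural basis) such that $e_ie_j=\alpha_{ij}e_i+\alpha_{ji}e_j$ with $\alpha_{ij}\in\mathbb{F}$, $\alpha_{ii}=\frac12$ and $\alpha_{ij}+\alpha_{ji}=1$ for all $i,j$. A derivation is a linear map $D:\mathbf{A}\to\mathbf{A}$ with $D(uv)=D(u)v+uD(v)$ for all $u,v$; $\mathrm{Der}(\mathbf{A})$ is the set of derivations. *)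

(* Defs.v *)
From HB Require Import structures.
From mathcomp Require Import all_boot all_order all_algebra.
Set Implicit Arguments. Unset Strict Implicit. Unset Printing Implicit Defensive.
Import Order.TTheory GRing.Theory Num.Theory.
Local Open Scope ring_scope.

(* 5-dimensional LV algebras: the underlying space is 'rV[F]_5, the natural
   basis vector e_i (0-based i : 'I_5) is delta_mx 0 i, and the structure
   constants are a matrix alpha with e_i e_j = alpha i j e_i + alpha j i e_j. *)

Definition lv_e (F : fieldType) (i : 'I_5) : 'rV[F]_5 := delta_mx 0 i.

Definition lv_prod (F : fieldType) (alpha : 'M[F]_5) (i j : 'I_5) : 'rV[F]_5 :=
  alpha i j *: lv_e F i + alpha j i *: lv_e F j.

Definition lv_mul (F : fieldType) (alpha : 'M[F]_5) (u v : 'rV[F]_5) : 'rV[F]_5 :=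
  \sum_(i < 5) \sum_(j < 5) (u 0 i * v 0 j) *: lv_prod alpha i j.

Definition is_LV (F : fieldType) (alpha : 'M[F]_5) : Prop :=
  (forall i, alpha i i = 2%:R^-1) /\ (forall i j, alpha i j + alpha j i = 1).

(* a linear map D : A -> A is represented by its matrix acting on row vectors *)
Definition is_derivation (F : fieldType) (alpha : 'M[F]_5) (D : 'M[F]_5) : Prop :=
  forall u v : 'rV[F]_5,
    lv_mul alpha u v *m D = lv_mul alpha (u *m D) v + lv_mul alpha u (v *m D).

Definition lv_half (F : fieldType) (alpha : 'M[F]_5) (i j : nat) : Prop :=
  lv_mul alpha (lv_e F (inord i)) (lv_e F (inord j))
  = 2%:R^-1 *: (lv_e F (inord i) + lv_e F (inord j)).

(* Main.v *)
Require Import Defs.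
From HB Require Import structures.
From mathcomp Require Import all_boot all_order all_algebra.
From mathcomp Require Import ring.
Import GRing.Theory.
Local Open Scope ring_scope.
Set Implicit Arguments. Unset Strict Implicit.

Section S.
Variables (F : fieldType) (alpha : 'M[F]_5).

Lemma lv_e_entry (i l : 'I_5) : lv_e F i 0 l = (l == i)%:R.
Proof. by rewrite /lv_e mxE eqxx. Qed.

Lemma lv_mul_entry (u v : 'rV[F]_5) k :
  lv_mul alpha u v 0 k = \sum_(a < 5) \sum_(b < 5) u 0 a * v 0 b *
     (alpha a b * (a == k)%:R + alpha b a * (b == k)%:R).
Proof.
rewrite /lv_mul summxE; apply: eq_bigr => a _; rewrite summxE.
apply: eq_bigr => b _; rewrite !mxE.
by rewrite eqxx /= ![k == _]eq_sym.
Qed.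

Lemma sum_delta (f : 'I_5 -> F) j : \sum_(b < 5) (b == j)%:R * f b = f j.
Proof.
rewrite (bigD1 j) //= big1 ?eqxx ?mul1r ?addr0 // => b /negbTE ->.
by rewrite mul0r.
Qed.

Lemma lv_mul_ee i j : lv_mul alpha (lv_e F i) (lv_e F j) = lv_prod alpha i j.
Proof.
apply/rowP => k; rewrite lv_mul_entry.
rewrite (eq_bigr (fun a => (a == i)%:R * \sum_(b < 5) (b == j)%:R *
   (alpha a b * (a == k)%:R + alpha b a * (b == k)%:R))); last first.
  move=> a _; rewrite mulr_sumr; apply: eq_bigr => b _.
  rewrite !lv_e_entry; ring.
rewrite sum_delta sum_delta /lv_prod !mxE eqxx /=.
by rewrite ![k == _]eq_sym.
Qed.

Lemma key (D : 'M[F]_5) (hD : is_derivation alpha D) i j k :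
  alpha i j * D i k + alpha j i * D j k =
  D i k * alpha k j + D j k * alpha k i
  + (j == k)%:R * \sum_(l < 5) D i l * alpha j l
  + (i == k)%:R * \sum_(l < 5) D j l * alpha i l.
Proof.
have := congr1 (fun M : 'rV_5 => M 0 k) (hD (lv_e F i) (lv_e F j)).
rewrite lv_mul_ee /lv_prod mulmxDl -!scalemxAl /lv_e -!rowE !mxE => ->.
rewrite !lv_mul_entry.
rewrite (eq_bigr (fun a => D i a * (alpha a j * (a == k)%:R + alpha j a * (j == k)%:R))); last first.
  move=> a _; rewrite (eq_bigr (fun b => (b == j)%:R * (D i a *
   (alpha a b * (a == k)%:R + alpha b a * (b == k)%:R)))).
    by rewrite sum_delta.
  by move=> b _; rewrite !mxE eqxx /=; ring.
rewrite [X in _ + X](eq_bigr (fun a => (a == i)%:R * \sum_(b < 5) D j b *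
   (alpha a b * (a == k)%:R + alpha b a * (b == k)%:R))); last first.
  move=> a _; rewrite mulr_sumr; apply: eq_bigr => b _.
  by rewrite !mxE eqxx /=; ring.
rewrite sum_delta.
rewrite (eq_bigr (fun a => (a == k)%:R * (D i a * alpha a j) + (j == k)%:R * (D i a * alpha j a))); last by move=> a _; ring.
rewrite big_split /= sum_delta -mulr_sumr.
rewrite [\sum_(b < 5) D j b * (_ + _)](eq_bigr (fun b => (b == k)%:R * (D j b * alpha b i) + (i == k)%:R * (D j b * alpha i b))); last by move=> b _; ring.
rewrite big_split /= sum_delta -mulr_sumr.
ring.
Qed.


End S.

Section M.
Variables (F : fieldType) (alpha : 'M[F]_5).
Hypothesis hchar : (2%:R : F) != 0.
Hypothesis hLV : is_LV alpha.
Variables (D : 'M[F]_5) (hD : is_derivation alpha D).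

Lemma half_add : 2%:R^-1 + 2%:R^-1 = 1 :> F.
Proof. by field. Qed.

Lemma step_edge i k : alpha k i != 2%:R^-1 -> i != k -> D i k = 0.
Proof.
move=> hk ik; have := @key _ _ _ hD i i k.
rewrite (negbTE ik) mul0r !addr0 hLV.1 -mulrDl half_add mul1r -mulrDr.
move=> e; apply/eqP; move: hk; apply: contraR => nz.
have: D i k * (alpha k i + alpha k i - 1) = 0 by rewrite mulrBr mulr1 -e subrr.
move/eqP; rewrite mulf_eq0 (negbTE nz) /= subr_eq0 => /eqP e2.
have : (alpha k i) * 2%:R = 2%:R^-1 * 2%:R by rewrite mulrC mulr2n mulVf // mulrDl !mul1r.
by move/(mulIf hchar) ->.
Qed.

Lemma step_half i j k : alpha i j = 2%:R^-1 -> alpha j i = 2%:R^-1 ->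
  D j k = 0 -> alpha k j != 2%:R^-1 -> i != k -> j != k -> D i k = 0.
Proof.
move=> hij hji djk hk ik jk; have := @key _ _ _ hD i j k.
rewrite (negbTE ik) (negbTE jk) !mul0r !addr0 hij hji djk !mulr0 !addr0 mul0r addr0.
move=> e; apply/eqP; move: hk; apply: contraR => nz.
have: D i k * (alpha k j - 2%:R^-1) = 0 by rewrite mulrBr -e mulrC subrr.
by move/eqP; rewrite mulf_eq0 (negbTE nz) /= subr_eq0.
Qed.

Lemma step_diag i : (forall l, l != i -> D i l = 0) -> D i i = 0.
Proof.
move=> off; have := @key _ _ _ hD i i i.
rewrite eqxx mul1r hLV.1 (bigD1 i) //= big1 ?addr0; last first.
  by move=> l /off ->; rewrite mul0r.
rewrite hLV.1 => e.
have l1 : 2%:R^-1 * D i i + 2%:R^-1 * D i i = D i i by rewrite -mulrDl half_add mul1r.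
have l2 : D i i / 2%:R + D i i / 2%:R + D i i / 2%:R + D i i / 2%:R = (2%:R^-1 + 2%:R^-1) * D i i + (2%:R^-1 + 2%:R^-1) * D i i by ring.
rewrite half_add mul1r in l2.
have e2 : D i i = D i i + D i i by rewrite -l2 -e l1.
by move: e2; rewrite -{1}[D i i]addr0 => /addrI/esym.
Qed.
End M.

Definition o0 : 'I_5 := @Ordinal 5 0 isT.
Definition o1 : 'I_5 := @Ordinal 5 1 isT.
Definition o2 : 'I_5 := @Ordinal 5 2 isT.
Definition o3 : 'I_5 := @Ordinal 5 3 isT.
Definition o4 : 'I_5 := @Ordinal 5 4 isT.

Lemma inord0 : inord 0 = o0. Proof. by apply/val_inj; rewrite /= inordK. Qed.
Lemma inord1 : inord 1 = o1. Proof. by apply/val_inj; rewrite /= inordK. Qed.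
Lemma inord2 : inord 2 = o2. Proof. by apply/val_inj; rewrite /= inordK. Qed.
Lemma inord3 : inord 3 = o3. Proof. by apply/val_inj; rewrite /= inordK. Qed.
Lemma inord4 : inord 4 = o4. Proof. by apply/val_inj; rewrite /= inordK. Qed.

Lemma ordE (i : 'I_5) : i = o0 \/ i = o1 \/ i = o2 \/ i = o3 \/ i = o4.
Proof.
case: i => [[|[|[|[|[|m]]]]] Hm].
- by left; apply: val_inj.
- by right; left; apply: val_inj.
- by do 2 right; left; apply: val_inj.
- by do 3 right; left; apply: val_inj.
- by do 4 right; apply: val_inj.
- by [].
Qed.

Lemma half_of (F : fieldType) (alpha : 'M[F]_5) (i j : 'I_5) :
  lv_mul alpha (lv_e F i) (lv_e F j) = 2%:R^-1 *: (lv_e F i + lv_e F j) ->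
  i != j -> alpha i j = 2%:R^-1.
Proof.
move=> + ij; move=> /(congr1 (fun M : 'rV_5 => M 0 i)).
rewrite lv_mul_ee /lv_prod !mxE !eqxx /= (negbTE ij).
by rewrite mulr1 mulr0 !addr0 mulr1.
Qed.

Lemma nonhalf_of (F : fieldType) (alpha : 'M[F]_5) (hchar : (2%:R : F) != 0)
  (hLV : is_LV alpha) (i j : 'I_5) :
  lv_mul alpha (lv_e F i) (lv_e F j) <> 2%:R^-1 *: (lv_e F i + lv_e F j) ->
  alpha i j != 2%:R^-1 /\ alpha j i != 2%:R^-1.
Proof.
move=> nh.
have key2 : alpha i j = 2%:R^-1 -> alpha j i = 2%:R^-1 -> False.
  by move=> e1 e2; apply: nh; rewrite lv_mul_ee /lv_prod e1 e2 scalerDr.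
have s := hLV.2 i j.
have hh := half_add hchar.
split; apply/negP => /eqP e; apply: key2 => //.
- by apply: (addrI (alpha i j)); rewrite s e hh.
- by apply: (addIr (alpha j i)); rewrite s e hh.
Qed.

Unset Implicit Arguments. Set Strict Implicit.

Theorem mainTheorem15 (F : fieldType) (hchar : (2%:R : F) != 0)
  (alpha : 'M[F]_5) (hLV : is_LV alpha)
  (h12 : ~ lv_half alpha 0 1) (h23 : ~ lv_half alpha 1 2)
  (h34 : ~ lv_half alpha 2 3) (h45 : ~ lv_half alpha 3 4)
  (h15 : ~ lv_half alpha 0 4)
  (h13 : lv_half alpha 0 2) (h14 : lv_half alpha 0 3)
  (h24 : lv_half alpha 1 3) (h25 : lv_half alpha 1 4)
  (h35 : lv_half alpha 2 4) :
  forall D : 'M[F]_5, is_derivation alpha D -> D = 0.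
Proof.
move=> D hD.
move: h12 h23 h34 h45 h15 h13 h14 h24 h25 h35.
rewrite /lv_half !inord0 !inord1 !inord2 !inord3 !inord4.
move=> /(nonhalf_of hchar hLV) [n01 n10] /(nonhalf_of hchar hLV) [n12 n21]
  /(nonhalf_of hchar hLV) [n23 n32] /(nonhalf_of hchar hLV) [n34 n43]
  /(nonhalf_of hchar hLV) [n04 n40].
move=> h02 h03 h13 h14 h24.
have a02 := half_of h02 isT. have a03 := half_of h03 isT.
have a13 := half_of h13 isT. have a14 := half_of h14 isT.
have a24 := half_of h24 isT.
have s := hLV.2; have hh := half_add hchar.
have flip : forall i j, alpha i j = 2%:R^-1 -> alpha j i = 2%:R^-1.
  move=> i j e; have := s i j; rewrite e -{2}hh => /addrI //.
have a20 := flip _ _ a02. have a30 := flip _ _ a03. have a31 := flip _ _ a13.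
have a41 := flip _ _ a14. have a42 := flip _ _ a24.
have d01 := step_edge hchar hLV hD n10 isT.
have d10 := step_edge hchar hLV hD n01 isT.
have d12 := step_edge hchar hLV hD n21 isT.
have d21 := step_edge hchar hLV hD n12 isT.
have d23 := step_edge hchar hLV hD n32 isT.
have d32 := step_edge hchar hLV hD n23 isT.
have d34 := step_edge hchar hLV hD n43 isT.
have d43 := step_edge hchar hLV hD n34 isT.
have d04 := step_edge hchar hLV hD n40 isT.
have d40 := step_edge hchar hLV hD n04 isT.
have d02 := step_half hD a03 a30 d32 n23 isT isT.
have d03 := step_half hD a02 a20 d23 n32 isT isT.
have d13 := step_half hD a14 a41 d43 n34 isT isT.
have d14 := step_half hD a13 a31 d34 n43 isT isT.
have d20 := step_half hD a24 a42 d40 n04 isT isT.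
have d24 := step_half hD a20 a02 d04 n40 isT isT.
have d30 := step_half hD a31 a13 d10 n01 isT isT.
have d31 := step_half hD a30 a03 d01 n10 isT isT.
have d41 := step_half hD a42 a24 d21 n12 isT isT.
have d42 := step_half hD a41 a14 d12 n21 isT isT.
have off : forall i l, l != i -> D i l = 0.
  move=> i l; by case: (ordE i) => [|[|[|[|]]]] ->; case: (ordE l) => [|[|[|[|]]]] -> //.
have diag : forall i, D i i = 0.
  by move=> i; apply: (step_diag hchar hLV hD) => l; apply: off.
apply/matrixP => i l; rewrite mxE.
have [->|nil] := eqVneq l i; first exact: diag.
exact: off.
Qed.
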